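(* Let $f\colon\mathbb{R}^n\to\mathbb{R}$ be convex and differentiable with $\|\nabla f(x)-\nabla f(y)\|\le L\|x-y\|$ for all $x,y$ (Euclidean norm, $L>0$), and assume $f$ has a minimizer $x_\star$; write $f_\star=f(x_\star)$. Let $\{\theta_k\}_{k=0}^\infty$ be a positive sequence with $\theta_0=1$ and $0\le\theta_{k+1}^2-\theta_{k+1}\le\theta_k^2$ for $k=0,1,\dots$, and set $\theta_{-1}=0$. Let $\{\varphi_k\}_{k=0}^\infty$ be a positive sequence with $0\le\varphi_k^2-\varphi_k\le2\theta_{k-1}^2$ for $k=0,1,\dots$. Given $x_0\in\mathbb{R}^n$, let $y_0=x_0$, $\tilde x_0=x_0$, and for $k=0,1,\dots$ \[ y_{k+1}=x_k-\tfrac1L\nabla f(x_k),\qquad x_{k+1}=y_{k+1}+\frac{\theta_k-1}{\theta_{k+1}}(y_{k+1}-y_k)+\frac{\theta_k}{\theta_{k+1}}(y_{k+1}-x_k), \] \[ \tilde x_{k+1}=y_{k+1}+\frac{\theta_k-1}{\varphi_{k+1}}(y_{k+1}-y_k)+\frac{\theta_k}{\varphi_{k+1}}(y_{k+1}-x_k). \] Then for $k=0,1,\dots$, \[ f(\tilde x_k)-f_\star\le\frac{L\|x_0-x_\star\|^2}{2\varphi_k^2}. \]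
   Context: The $\tilde x_k$ are the secondary iterates of OGM with the ''last-step modification''. $\|\cdot\|$ is the Euclidean norm. *)

(* Defs.v *)
From HB Require Import structures.
From mathcomp Require Import all_boot all_order all_algebra.
From mathcomp Require Import all_classical all_reals all_analysis.
Set Implicit Arguments. Unset Strict Implicit. Unset Printing Implicit Defensive.
Import Order.TTheory GRing.Theory Num.Theory.
Import numFieldNormedType.Exports.
Local Open Scope ring_scope.

(* Euclidean inner product and Euclidean norm (the analysis library's norm on
   'rV is the max norm, so we define the Euclidean one explicitly). *)
Definition dotv (R : realType) (n : nat) (u v : 'rV[R]_n) : R :=
  \sum_(i < n) u 0 i * v 0 i.
Definition enorm (R : realType) (n : nat) (u : 'rV[R]_n) : R :=
  Num.sqrt (dotv u u).

Definition convex_fun (R : realType) (n : nat) (f : 'rV[R]_n -> R) : Prop :=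
  forall (x y : 'rV[R]_n) (t : R), 0 <= t -> t <= 1 ->
    f (t *: x + (1 - t) *: y) <= t * f x + (1 - t) * f y.

Definition is_gradient (R : realType) (n : nat) (f : 'rV[R]_n -> R)
  (g : 'rV[R]_n -> 'rV[R]_n) : Prop :=
  forall x : 'rV[R]_n, differentiable f x /\ forall h, 'd f x h = dotv (g x) h.

Definition prev_theta (R : realType) (theta : nat -> R) (k : nat) : R :=
  if k is k'.+1 then theta k' else 0.

Fixpoint ogm_xy (R : realType) (n : nat) (g : 'rV[R]_n -> 'rV[R]_n) (L : R)
  (theta : nat -> R) (x0 : 'rV[R]_n) (k : nat) : 'rV[R]_n * 'rV[R]_n :=
  match k with
  | 0 => (x0, x0)
  | k'.+1 =>
      let xy := ogm_xy g L theta x0 k' in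
      let x := xy.1 in let y := xy.2 in
      let y' := x - L^-1 *: g x in
      (y' + ((theta k' - 1) / theta k'.+1) *: (y' - y)
          + (theta k' / theta k'.+1) *: (y' - x), y')
  end.

Definition ogm_xt (R : realType) (n : nat) (g : 'rV[R]_n -> 'rV[R]_n) (L : R)
  (theta phi : nat -> R) (x0 : 'rV[R]_n) (k : nat) : 'rV[R]_n :=
  match k with
  | 0 => x0
  | k'.+1 =>
      let xy := ogm_xy g L theta x0 k' in
      let x := xy.1 in let y := xy.2 in
      let y' := x - L^-1 *: g x in
      y' + ((theta k' - 1) / phi k'.+1) *: (y' - y)
         + (theta k' / phi k'.+1) *: (y' - x)
  end.

(* Main.v *)
Require Import Defs.
From HB Require Import structures.
From mathcomp Require Import all_boot all_order all_algebra.
From mathcomp Require Import all_classical all_reals all_analysis.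
From mathcomp Require Import ring lra.
Import Order.TTheory GRing.Theory Num.Theory.
Import numFieldNormedType.Exports.
Local Open Scope ring_scope.

Lemma hder {R : realType} {n : nat} (f : 'rV[R]_n -> R) (g : 'rV[R]_n -> 'rV[R]_n)
  (x d : 'rV[R]_n) (t : R) : is_gradient f g ->
  is_derive t 1 (fun s : R => f (x + s *: d)) (dotv (g (x + t *: d)) d).
Proof.
move=> hg.
pose k := fun s : R => x + s *: d.
have dZ : differentiable (fun s : R => s *: d) t.
  exact: (@differentiableZl _ _ _ id).
have dk : differentiable k t.
  by rewrite /k; apply: differentiableD.
have [df dfe] := hg (k t).
have dfk : differentiable (f \o k) t by apply: differentiable_comp.
apply: DeriveDef.
  by apply/derivable1_diffP.
have := @deriveE R _ _ (f \o k) t 1 dfk.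
rewrite /= => ->.
rewrite (diff_comp dk df) /= dfe.
suff -> : 'd k t 1 = d by [].
have e : k = cst x + (fun s : R => s *: d) by apply/funext => s.
have dc : differentiable (cst x : R -> 'rV[R]_n) t by [].
have := @diffD R R _ _ _ t dc dZ.
move=> h.
clearbody k; subst k.
rewrite h /=.
have h0 : 'd (cst x) t 1 = 0 :> 'rV[R]_n.
  by have := @diff_cst R R _ x t; move=> /(congr1 (fun F => F 1)).
have h1 : 'd (fun s : R => s *: d) t 1 = d.
  have did : differentiable (id : R -> R) t by exact: ex_diff.
  have := @diffZl R R _ id d t did.
  move=> /(congr1 (fun F => F 1)) /=.
  move=> e; apply: eq_trans e _.
  have e2 : 'd (id : R -> R) t 1 = 1.
    by have := @diff_val _ _ _ _ _ _ _ (@is_diff_id R R t); move=> /(congr1 (fun F => F 1)).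
  by rewrite e2 scale1r.
apply: (eq_trans (congr2 (fun a b => a + b) h0 h1)).
exact: add0r.
Qed.

Ltac dotid := rewrite /dotv ?(mulrBr, mulrBl); do 3 rewrite ?mulr_sumr ?mulr_suml -?sumrN -?big_split /=;
  apply: eq_bigr => i _; rewrite !mxE.

Lemma dotv_ge0 {R : realType} {n : nat} (u : 'rV[R]_n) : 0 <= dotv u u.
Proof. by apply: sumr_ge0 => i _; rewrite -expr2 sqr_ge0. Qed.

Lemma dotv_le0 {R : realType} {n : nat} (u : 'rV[R]_n) : dotv u u <= 0 -> u = 0.
Proof.
move=> h.
have h0 : dotv u u = 0 by apply/eqP; rewrite eq_le h dotv_ge0.
move/eqP: h0; rewrite /dotv psumr_eq0; last by move=> i _; rewrite -expr2 sqr_ge0.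
move=> /allP H; apply/rowP => j; rewrite [RHS]mxE.
by have := H j (mem_index_enum _); rewrite /= mulf_eq0 orbb => /eqP.
Qed.

Lemma enorm2 {R : realType} {n : nat} (u : 'rV[R]_n) : enorm u ^+ 2 = dotv u u.
Proof. by rewrite /enorm sqr_sqrtr // dotv_ge0. Qed.

Lemma lip2 {R : realType} {n : nat} {g : 'rV[R]_n -> 'rV[R]_n} {L : R} :
  0 < L -> (forall x y, enorm (g x - g y) <= L * enorm (x - y)) ->
  forall x y, dotv (g x - g y) (g x - g y) <= L ^+ 2 * dotv (x - y) (x - y).
Proof.
move=> L0 H x y; rewrite -!enorm2 -exprMn.
have e0 : 0 <= enorm (g x - g y) by exact: sqrtr_ge0.
by rewrite !expr2; apply: ler_pM.
Qed.

Lemma lipdot {R : realType} {n : nat} {g : 'rV[R]_n -> 'rV[R]_n} {L : R} :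
  0 < L -> (forall x y, enorm (g x - g y) <= L * enorm (x - y)) ->
  forall x y, `|dotv (g x - g y) (x - y)| <= L * dotv (x - y) (x - y).
Proof.
move=> L0 H x y.
have h1 := lip2 (g:=g) L0 H x y.
set a := g x - g y in h1 *; set b := x - y in h1 *.
have e1 : dotv (a - L *: b) (a - L *: b) = dotv a a - 2 * L * dotv a b + L ^+ 2 * dotv b b.
  by dotid; ring.
have e2 : dotv (a + L *: b) (a + L *: b) = dotv a a + 2 * L * dotv a b + L ^+ 2 * dotv b b.
  by dotid; ring.
have h2 := dotv_ge0 (a - L *: b); have h3 := dotv_ge0 (a + L *: b).
rewrite e1 in h2; rewrite e2 in h3.
rewrite ler_norml; apply/andP; split; nra.
Qed.

Lemma mvt {R : realType} (F dF : R -> R) (a b : R) : a < b ->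
  (forall t : R, is_derive t 1 F (dF t)) ->
  exists2 c, a < c < b & F b - F a = dF c * (b - a).
Proof.
move=> ab dF_.
have [|c cab e] := MVT ab (fun (t : R) (_ : t \in `]a, b[%R) => dF_ t).
  apply: continuous_subspaceT => t.
  apply: differentiable_continuous.
  apply/derivable1_diffP.
  by have [] := dF_ t.
by exists c => //; move: cab; rewrite in_itv.
Qed.

Lemma derZid {R : realType} (a t : R) : is_derive t 1 (fun s : R => s * a) a.
Proof.
have h : is_derive t 1 (a \*: (id : R -> R)) (a *: 1) by apply: is_deriveZ.
have e : (a \*: (id : R -> R)) = (fun s : R => s * a) by apply/funext => s /=; rewrite mulrC.
rewrite -e; apply: is_derive_eq h _.
by rewrite /GRing.scale /= mulr1.
Qed.

Lemma derX2 {R : realType} (b t : R) : is_derive t 1 (fun s : R => s ^+ 2 * b) (2 * t * b).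
Proof.
have h : is_derive t 1 (b \*: ((id : R -> R) ^+ 2)) (b *: ((2%:R * id t ^+ 1) *: 1)).
  by apply: is_deriveZ; apply: is_deriveX.
have e : (b \*: ((id : R -> R) ^+ 2)) = (fun s : R => s ^+ 2 * b).
  by apply/funext => s /=; rewrite mulrC.
rewrite -e; apply: is_derive_eq h _.
rewrite /GRing.scale /= mulr1 expr1; ring.
Qed.

Lemma descent {R : realType} {n : nat} (f : 'rV[R]_n -> R) (g : 'rV[R]_n -> 'rV[R]_n) (L : R) :
  is_gradient f g -> 0 < L -> (forall x y, enorm (g x - g y) <= L * enorm (x - y)) ->
  forall x d, f (x + d) <= f x + dotv (g x) d + L / 2 * dotv d d.
Proof.
move=> hg L0 hl x d.
pose a := dotv (g x) d; pose b := L / 2 * dotv d d.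
pose H := (fun s : R => f (x + s *: d)) - (fun s : R => s * a) - (fun s : R => s ^+ 2 * b).
have dH : forall t : R, is_derive t 1 H (dotv (g (x + t *: d)) d - a - 2 * t * b).
  move=> t; apply: is_deriveB; [apply: is_deriveB; [exact: hder | exact: derZid] | exact: derX2].
have [c /andP[c0 c1] e] := @mvt _ H _ 0 1 ltr01 dH.
have := lipdot L0 hl (x + c *: d) x.
have -> : dotv (g (x + c *: d) - g x) (x + c *: d - x) = c * (dotv (g (x + c *: d)) d - a).
  by rewrite /a; dotid; ring.
have -> : dotv (x + c *: d - x) (x + c *: d - x) = c ^+ 2 * dotv d d.
  by dotid; ring.
rewrite ler_norml => /andP[_ hc].
have eH : forall s, H s = f (x + s *: d) - s * a - s ^+ 2 * b by [].
move: e; rewrite !eH scale1r scale0r addr0 => e.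
have hdd := dotv_ge0 d.
rewrite /b in e.
set D := dotv (g (x + c *: d)) d in e hc.
have h1 : c * ((D - a) - L * c * dotv d d) <= 0 by lra.
have h2 : (D - a) - L * c * dotv d d <= 0.
  by move: h1; rewrite pmulr_rle0.
rewrite /a in e h2 *.
lra.
Qed.

Lemma lim_le_aux {R : realType} (a s K : R) : 0 <= K ->
  (forall t, 0 < t -> t < 1 -> a <= s + t * K) -> a <= s.
Proof.
move=> K0 H; rewrite leNgt; apply/negP => sa.
set del := a - s.
have d0 : 0 < del by rewrite /del subr_gt0.
set t := del / (2 * (K + del)).
have kd : 0 < K + del by lra.
have t0 : 0 < t by rewrite /t divr_gt0 // mulr_gt0.
have tK : t * (2 * (K + del)) = del by rewrite /t mulfVK // gt_eqF // mulr_gt0.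
have t1 : t < 1.
  rewrite /t ltr_pdivrMr ?mul1r ?mulr_gt0 //; lra.
have := H t t0 t1.
have := mulr_gt0 t0 d0.
have ed : del = a - s by [].
lra.
Qed.

Lemma foconv {R : realType} {n : nat} (f : 'rV[R]_n -> R) (g : 'rV[R]_n -> 'rV[R]_n) (L : R) :
  convex_fun f -> is_gradient f g -> 0 < L -> (forall x y, enorm (g x - g y) <= L * enorm (x - y)) ->
  forall v w, f v + dotv (g v) (w - v) <= f w.
Proof.
move=> hc hg L0 hl v w.
set d := w - v.
have dd0 := dotv_ge0 d.
suff : dotv (g v) d <= f w - f v by lra.
apply: (@lim_le_aux _ _ _ (L * dotv d d)); first by rewrite mulr_ge0 // ltW.
move=> t t0 t1.
have dH : forall s : R, is_derive s 1 (fun s : R => f (v + s *: d)) (dotv (g (v + s *: d)) d).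
  by move=> s; exact: hder.
have [c /andP[c0 ct] e] := @mvt _ _ _ 0 t t0 dH.
move: e; rewrite scale0r addr0 subr0 => e.
have hcv := hc w v t (ltW t0) (ltW t1).
have ev : t *: w + (1 - t) *: v = v + t *: d.
  by apply/rowP => i; rewrite !mxE; ring.
rewrite ev in hcv.
have := lipdot L0 hl (v + c *: d) v.
have -> : dotv (g (v + c *: d) - g v) (v + c *: d - v) = c * (dotv (g (v + c *: d)) d - dotv (g v) d).
  by dotid; ring.
have -> : dotv (v + c *: d - v) (v + c *: d - v) = c ^+ 2 * dotv d d.
  by dotid; ring.
rewrite ler_norml => /andP[hc1 _].
set D := dotv (g (v + c *: d)) d in e hc1.
set av := dotv (g v) d in hc1 *.
have h1 : c * ((av - D) - L * c * dotv d d) <= 0 by lra.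
have h2 : (av - D) - L * c * dotv d d <= 0 by move: h1; rewrite pmulr_rle0.
have h3 : t * (D - (f w - f v)) <= 0 by nra.
have h4 : D - (f w - f v) <= 0 by move: h3; rewrite pmulr_rle0.
have h5 : L * c * dotv d d <= L * t * dotv d d.
  by apply: ler_wpM2r => //; apply: ler_wpM2l => //; rewrite ltW.
lra.
Qed.

Lemma coco {R : realType} {n : nat} (f : 'rV[R]_n -> R) (g : 'rV[R]_n -> 'rV[R]_n) (L : R) :
  convex_fun f -> is_gradient f g -> 0 < L -> (forall x y, enorm (g x - g y) <= L * enorm (x - y)) ->
  forall u v, f v + dotv (g v) (u - v) + dotv (g u - g v) (g u - g v) / (2 * L) <= f u.
Proof.
move=> hc hg L0 hl u v.
have Ln : L != 0 by rewrite gt_eqF.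
set il := L^-1.
set w := u - il *: (g u - g v).
have h1 := @foconv _ _ f g L hc hg L0 hl v w.
have h2 := @descent _ _ f g L hg L0 hl u (w - u).
have ew : u + (w - u) = w by rewrite addrC subrK.
rewrite ew in h2.
set P := dotv (g u) (g u - g v) in h1 h2.
set Qv := dotv (g v) (g u - g v) in h1 h2.
have e1 : dotv (g v) (w - v) = dotv (g v) (u - v) - il * Qv.
  by rewrite /Qv /w; dotid; ring.
have e2 : dotv (g u) (w - u) = - (il * P).
  by rewrite /P /w; dotid; ring.
have e3 : L / 2 * dotv (w - u) (w - u) = il / 2 * (P - Qv).
  rewrite /P /Qv /w /il; dotid; field; exact: Ln.
have e4 : dotv (g u - g v) (g u - g v) / (2 * L) = il / 2 * (P - Qv).
  have -> : dotv (g u - g v) (g u - g v) = P - Qv by rewrite /P /Qv; dotid; ring.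
  by rewrite /il; field.
rewrite e1 in h1; rewrite e2 e3 in h2; rewrite e4.
lra.
Qed.

Lemma gstar0 {R : realType} {n : nat} (f : 'rV[R]_n -> R) (g : 'rV[R]_n -> 'rV[R]_n) (L : R) xs :
  is_gradient f g -> 0 < L -> (forall x y, enorm (g x - g y) <= L * enorm (x - y)) ->
  (forall x, f xs <= f x) -> g xs = 0.
Proof.
move=> hg L0 hl hmin.
have Ln : L != 0 by rewrite gt_eqF.
have h := @descent _ _ f g L hg L0 hl xs (- L^-1 *: g xs).
have := hmin (xs + - L^-1 *: g xs).
have e1 : dotv (g xs) (- L^-1 *: g xs) = - L^-1 * dotv (g xs) (g xs) by dotid; ring.
have e2 : L / 2 * dotv (- L^-1 *: g xs) (- L^-1 *: g xs) = L^-1 / 2 * dotv (g xs) (g xs).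
  by dotid; field.
rewrite e1 e2 in h => h2.
apply: dotv_le0.
have il0 : 0 < L^-1 by rewrite invr_gt0.
have : L^-1 * dotv (g xs) (g xs) <= 0 by lra.
by rewrite pmulr_rle0.
Qed.

Lemma step_alg {R : realType} {n : nat} (xk xk' gk gk' xs zk : 'rV[R]_n) (th thp L fk fk' fs : R) :
  0 < L -> 1 <= th -> th ^+ 2 - th <= thp ^+ 2 ->
  fk + dotv gk (xs - xk) + dotv (0 - gk) (0 - gk) / (2 * L) <= fs ->
  fk + dotv gk (xk' - xk) + dotv (gk' - gk) (gk' - gk) / (2 * L) <= fk' ->
  0 <= fk' - fs - dotv gk' gk' / (2 * L) ->
  zk = th *: xk - (th - 1) *: (xk' - L^-1 *: gk') ->
  2 * th ^+ 2 * (fk - fs - dotv gk gk / (2 * L))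
    + L / 2 * dotv (zk - (2 * th / L) *: gk - xs) (zk - (2 * th / L) *: gk - xs)
  <= 2 * thp ^+ 2 * (fk' - fs - dotv gk' gk' / (2 * L)) + L / 2 * dotv (zk - xs) (zk - xs).
Proof.
move=> L0 th1 hthp I1 I2 Ap ezk.
have Ln : L != 0 by rewrite gt_eqF.
set il := L^-1.
have cv : forall x : R, x / (2 * L) = il / 2 * x by move=> x; rewrite /il; field.
rewrite !cv in I1 I2 Ap *.
have eN1 : dotv (0 - gk) (0 - gk) = dotv gk gk by dotid; ring.
have eN2 : dotv (gk' - gk) (gk' - gk) = dotv gk' gk' - 2 * dotv gk gk' + dotv gk gk by dotid; ring.
have eI1 : dotv gk (xs - xk) = - dotv gk (xk - xs) by dotid; ring.
have eZ : L / 2 * dotv (zk - (2 * th / L) *: gk - xs) (zk - (2 * th / L) *: gk - xs)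
   = L / 2 * dotv (zk - xs) (zk - xs) - 2 * th * dotv gk (zk - xs) + 2 * th ^+ 2 * il * dotv gk gk.
  by rewrite /il; dotid; field.
have eZ2 : dotv gk (zk - xs) = dotv gk (xk - xs) + (th - 1) * (dotv gk (xk - xk') + il * dotv gk gk').
  by rewrite ezk /il; dotid; ring.
rewrite eN1 eI1 in I1; rewrite eN2 in I2.
rewrite eZ eZ2.
set a1 := dotv gk (xk - xs) in I1 *.
set a2 := dotv gk (xk' - xk) in I2.
have ea2 : dotv gk (xk - xk') = - a2 by rewrite /a2; dotid; ring.
rewrite ea2.
have th0 : 0 <= th by lra.
have p1 : 0 <= 2 * th * (fs - (fk - a1 + il / 2 * dotv gk gk)).
  by apply: mulr_ge0; lra.
have p2 : 0 <= 2 * th * (th - 1) * (fk' - (fk + a2 + il / 2 * (dotv gk' gk' - 2 * dotv gk gk' + dotv gk gk))).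
  by apply: mulr_ge0; [apply: mulr_ge0; lra | lra].
have p3 : 0 <= 2 * (thp ^+ 2 - (th ^+ 2 - th)) * (fk' - fs - il / 2 * dotv gk' gk').
  by apply: mulr_ge0; lra.
lra.
Qed.

Lemma final_alg {R : realType} {n : nat} (xk gk xs z xt gt : 'rV[R]_n) (phi L fk fs ft : R) :
  0 < L -> 1 <= phi ->
  ft + dotv gt (xk - xt) + dotv (gk - gt) (gk - gt) / (2 * L) <= fk ->
  ft + dotv gt (xs - xt) + dotv (0 - gt) (0 - gt) / (2 * L) <= fs ->
  phi *: xt = (phi - 1) *: (xk - L^-1 *: gk) + z ->
  phi ^+ 2 * (ft - fs) <= (phi ^+ 2 - phi) * (fk - fs - dotv gk gk / (2 * L))
     + L / 2 * dotv (z - xs) (z - xs).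
Proof.
move=> L0 ph1 J1 J2 ext.
have Ln : L != 0 by rewrite gt_eqF.
set il := L^-1.
have cv : forall x : R, x / (2 * L) = il / 2 * x by move=> x; rewrite /il; field.
rewrite !cv in J1 J2 *.
have J3 := dotv_ge0 (z - xs - (phi * il) *: gt).
have eJ3 : L / 2 * dotv (z - xs - (phi * il) *: gt) (z - xs - (phi * il) *: gt)
   = L / 2 * dotv (z - xs) (z - xs) - phi * (dotv gt z - dotv gt xs) + phi ^+ 2 * il / 2 * dotv gt gt.
  by rewrite /il; dotid; field.
have p3 : 0 <= L / 2 * dotv (z - xs - (phi * il) *: gt) (z - xs - (phi * il) *: gt).
  by apply: mulr_ge0 => //; apply: divr_ge0; lra.
rewrite eJ3 in p3.
have e1 : dotv gt (xk - xt) = dotv gt xk - dotv gt xt by dotid; ring.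
have e2 : dotv (gk - gt) (gk - gt) = dotv gk gk - 2 * dotv gt gk + dotv gt gt by dotid; ring.
have e3 : dotv gt (xs - xt) = dotv gt xs - dotv gt xt by dotid; ring.
have e4 : dotv (0 - gt) (0 - gt) = dotv gt gt by dotid; ring.
rewrite e1 e2 in J1; rewrite e3 e4 in J2.
have e5 : phi * dotv gt xt = (phi - 1) * (dotv gt xk - il * dotv gt gk) + dotv gt z.
  have -> : phi * dotv gt xt = dotv gt (phi *: xt) by dotid; ring.
  by rewrite ext /il; dotid; ring.
have p1 : 0 <= phi * (phi - 1) * (fk - (ft + (dotv gt xk - dotv gt xt) + il / 2 * (dotv gk gk - 2 * dotv gt gk + dotv gt gt))).
  by apply: mulr_ge0; [apply: mulr_ge0; lra | lra].
have p2 : 0 <= phi * (fs - (ft + (dotv gt xs - dotv gt xt) + il / 2 * dotv gt gt)).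
  by apply: mulr_ge0; lra.
have p4 : phi * (phi * dotv gt xt) = phi * ((phi - 1) * (dotv gt xk - il * dotv gt gk) + dotv gt z).
  by rewrite e5.
lra.
Qed.

Definition Zk {R : realType} {n : nat} (g : 'rV[R]_n -> 'rV[R]_n) (L : R) (theta : nat -> R)
  (x0 : 'rV[R]_n) (k : nat) : 'rV[R]_n :=
  theta k *: (ogm_xy g L theta x0 k).1 - (theta k - 1) *: (ogm_xy g L theta x0 k).2.

Lemma Zrec {R : realType} {n : nat} (g : 'rV[R]_n -> 'rV[R]_n) (L : R) (theta : nat -> R)
  (x0 : 'rV[R]_n) (k : nat) : L != 0 -> theta k.+1 != 0 ->
  Zk g L theta x0 k.+1 = Zk g L theta x0 k - (2 * theta k / L) *: g (ogm_xy g L theta x0 k).1.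
Proof.
move=> Ln tn; rewrite /Zk /=.
apply/rowP => i; rewrite !mxE; field.
by rewrite Ln tn.
Qed.

Lemma Z0 {R : realType} {n : nat} (g : 'rV[R]_n -> 'rV[R]_n) (L : R) (theta : nat -> R)
  (x0 : 'rV[R]_n) : theta 0%N = 1 -> Zk g L theta x0 0 = x0.
Proof. by move=> t0; rewrite /Zk /= t0 subrr scale0r subr0 scale1r. Qed.

Lemma Xt_eq {R : realType} {n : nat} (g : 'rV[R]_n -> 'rV[R]_n) (L : R) (theta phi : nat -> R)
  (x0 : 'rV[R]_n) (k : nat) : L != 0 -> theta k.+1 != 0 -> phi k.+1 != 0 ->
  phi k.+1 *: ogm_xt g L theta phi x0 k.+1 =
  (phi k.+1 - 1) *: ((ogm_xy g L theta x0 k).1 - L^-1 *: g (ogm_xy g L theta x0 k).1)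
  + Zk g L theta x0 k.+1.
Proof.
move=> Ln tn pn; rewrite /Zk /ogm_xt /=.
apply/rowP => i; rewrite !mxE; field.
by rewrite Ln tn pn.
Qed.

Lemma ge1_of {R : realType} (t : R) : 0 < t -> 0 <= t ^+ 2 - t -> 1 <= t.
Proof.
move=> t0 h.
have : 0 <= t * (t - 1) by lra.
by rewrite pmulr_rge0 // subr_ge0.
Qed.

Lemma dot0l {R : realType} {n : nat} (v : 'rV[R]_n) : dotv 0 v = 0.
Proof. by rewrite /dotv big1 // => i _; rewrite mxE mul0r. Qed.

Lemma dot0r {R : realType} {n : nat} (v : 'rV[R]_n) : dotv v 0 = 0.
Proof. by rewrite /dotv big1 // => i _; rewrite mxE mulr0. Qed.

Theorem theorem2 (R : realType) (n : nat) (f : 'rV[R]_n -> R)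
  (g : 'rV[R]_n -> 'rV[R]_n) (L : R) (xs : 'rV[R]_n)
  (theta phi : nat -> R) (x0 : 'rV[R]_n) :
  convex_fun f ->
  is_gradient f g ->
  0 < L ->
  (forall x y, enorm (g x - g y) <= L * enorm (x - y)) ->
  (forall x, f xs <= f x) ->
  (forall k, 0 < theta k) ->
  theta 0%N = 1 ->
  (forall k, 0 <= theta k.+1 ^+ 2 - theta k.+1 /\
             theta k.+1 ^+ 2 - theta k.+1 <= theta k ^+ 2) ->
  (forall k, 0 < phi k) ->
  (forall k, 0 <= phi k ^+ 2 - phi k /\
             phi k ^+ 2 - phi k <= 2 * prev_theta theta k ^+ 2) ->
  forall k : nat,
    f (ogm_xt g L theta phi x0 k) - f xs
      <= L * enorm (x0 - xs) ^+ 2 / (2 * phi k ^+ 2).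
Proof.
move=> hc hg L0 hl hmin tpos t0 tth ppos pph k.
have Ln : L != 0 by rewrite gt_eqF.
have gs := @gstar0 _ _ f g L xs hg L0 hl hmin.
have Q := @coco _ _ f g L hc hg L0 hl.
have Qs : forall u, f u + dotv (g u) (xs - u) + dotv (0 - g u) (0 - g u) / (2 * L) <= f xs.
  by move=> u; rewrite -gs; apply: Q.
set X := fun j => (ogm_xy g L theta x0 j).1.
pose A j := f (X j) - f xs - dotv (g (X j)) (g (X j)) / (2 * L).
have Apos : forall j, 0 <= A j.
  move=> j; have := Q (X j) xs; rewrite gs dot0l subr0 /A; lra.
have th1 : forall j, 1 <= theta j.
  by case=> [|j]; [rewrite t0 lexx | apply: ge1_of; [exact: tpos | exact: (tth j).1]].
pose W j := 2 * theta j ^+ 2 * A j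
   + L / 2 * dotv (Zk g L theta x0 j.+1 - xs) (Zk g L theta x0 j.+1 - xs).
have Wb : forall j, W j <= L / 2 * dotv (x0 - xs) (x0 - xs).
  elim => [|j IH].
    have I2 : f x0 + dotv (g x0) (x0 - x0) + dotv (g x0 - g x0) (g x0 - g x0) / (2 * L) <= f x0.
      rewrite !subrr dot0r dot0l; lra.
    have ezk : x0 = 1 *: x0 - (1 - 1) *: (x0 - L^-1 *: g x0).
      by rewrite subrr scale0r subr0 scale1r.
    have := @step_alg _ _ x0 x0 (g x0) (g x0) xs x0 1 0 L (f x0) (f x0) (f xs) L0 (lexx 1) _
      (Qs x0) I2 (Apos 0%N) ezk.
    rewrite /W Zrec ?Z0 ?t0 //; last by rewrite (gt_eqF (tpos _)).
    move=> H; have := H ltac:(lra).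
    rewrite /A /X /=; lra.
  have ezk : Zk g L theta x0 j.+1 = theta j.+1 *: X j.+1 - (theta j.+1 - 1) *: (X j - L^-1 *: g (X j)).
    by [].
  have := @step_alg _ _ (X j.+1) (X j) (g (X j.+1)) (g (X j)) xs (Zk g L theta x0 j.+1)
     (theta j.+1) (theta j) L (f (X j.+1)) (f (X j)) (f xs) L0 (th1 _) (tth j).2
     (Qs _) (Q _ _) (Apos j) ezk.
  move=> H.
  rewrite /W (@Zrec _ _ g L theta x0 j.+1 Ln (lt0r_neq0 (tpos _))).
  apply: le_trans H _.
  by apply: le_trans IH; rewrite /W /A.
case: k => [|k].
  have p1 : 1 <= phi 0%N by apply: ge1_of; [exact: ppos | exact: (pph 0%N).1].
  have p2 := (pph 0%N).2; rewrite /= expr0n /= mulr0 in p2.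
  have pe : phi 0%N = 1 by nra.
  rewrite pe expr1n mulr1 /= enorm2.
  have := @descent _ _ f g L hg L0 hl xs (x0 - xs).
  rewrite gs dot0l addrC subrK.
  lra.
set xt := ogm_xt g L theta phi x0 k.+1.
have p1 : 1 <= phi k.+1 by apply: ge1_of; [exact: ppos | exact: (pph k.+1).1].
have ext := @Xt_eq _ _ g L theta phi x0 k Ln (lt0r_neq0 (tpos _)) (lt0r_neq0 (ppos _)).
have F := @final_alg _ _ (X k) (g (X k)) xs (Zk g L theta x0 k.+1) xt (g xt) (phi k.+1) L
   (f (X k)) (f xs) (f xt) L0 p1 (Q _ _) (Qs _) ext.
have p2 := (pph k.+1).2; rewrite /= in p2.
have hA : (phi k.+1 ^+ 2 - phi k.+1) * A k <= 2 * theta k ^+ 2 * A k.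
  by apply: ler_wpM2r => //; exact: Apos.
have := Wb k; rewrite /W => Wk.
rewrite enorm2.
have ph0 : 0 < 2 * phi k.+1 ^+ 2 by rewrite mulr_gt0 // exprn_gt0.
rewrite ler_pdivlMr //.
rewrite /A in hA Wk.
nra.
Qed.
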